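(* Let $0<q<1/2$, $p=1-q$, $\lambda=q/p$, $c(x)=x-1-\log x$ for $x>0$, and for integers $z\ge1$ let $$P_{SN}(z)=1-\sum_{k=0}^{z-1}e^{-zq/p}\frac{(zq/p)^k}{k!}\left(1-\left(\frac qp\right)^{z-k}\right).$$ Then as $z\to+\infty$, $$P_{SN}(z)\sim\frac{e^{-zc(\lambda)}}{2}.$$
   Context: $P_{SN}(z)$ is Nakamoto's approximation of the probability of success of a double-spend attack by attackers with relative hash power $q$ after $z$ confirmations. Note $c(\lambda)>0$ for $\lambda\neq1$. *)

(* Defs.v *)
From Stdlib Require Import Reals List Factorial.
From Coquelicot Require Import Coquelicot.
Open Scope R_scope.

Definition c_fun (x : R) : R := x - 1 - ln x.

Definition sum_lt (n : nat) (f : nat -> R) : R :=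
  fold_right Rplus 0 (map f (seq 0 n)).

Definition P_SN (q : R) (z : nat) : R :=
  let p := 1 - q in
  1 - sum_lt z (fun k =>
        exp (- (INR z * q / p)) * (INR z * q / p) ^ k / INR (fact k)
        * (1 - (q / p) ^ (z - k))).

(* Main.v *)
Require Import Defs.
From Stdlib Require Import Reals Arith Lia Lra Psatz List.
From Coquelicot Require Import Coquelicot.
Open Scope R_scope.

Lemma sum_lt_0 f : sum_lt 0 f = 0.
Proof. reflexivity. Qed.

Lemma sum_lt_S n f : sum_lt (S n) f = sum_lt n f + f n.
Proof.
  unfold sum_lt. rewrite seq_S, map_app, fold_right_app. simpl.
  generalize (map f (seq 0 n)). intro l.
  induction l as [|a l IH]; simpl; [ring|]. rewrite IH. ring.
Qed.

Lemma sum_lt_ext n f g : (forall k, (k < n)%nat -> f k = g k) -> sum_lt n f = sum_lt n g.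
Proof.
  induction n; intros H; [reflexivity|]. rewrite !sum_lt_S, IHn by (intros; apply H; lia).
  rewrite H by lia. reflexivity.
Qed.

Lemma sum_lt_le n f g : (forall k, (k < n)%nat -> f k <= g k) -> sum_lt n f <= sum_lt n g.
Proof.
  induction n; intros H; [unfold sum_lt; simpl; lra|]. rewrite !sum_lt_S.
  assert (sum_lt n f <= sum_lt n g) by (apply IHn; intros; apply H; lia).
  specialize (H n ltac:(lia)). lra.
Qed.

Lemma sum_lt_nonneg n f : (forall k, (k < n)%nat -> 0 <= f k) -> 0 <= sum_lt n f.
Proof.
  intros H. replace 0 with (sum_lt n (fun _ => 0)).
  - apply sum_lt_le. exact H.
  - induction n; [reflexivity|]. rewrite sum_lt_S, IHn by (intros; apply H; lia). ring.
Qed.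

Lemma sum_lt_scal n a f : sum_lt n (fun k => a * f k) = a * sum_lt n f.
Proof. induction n; [unfold sum_lt; simpl; ring|]. rewrite !sum_lt_S, IHn. ring. Qed.

Lemma sum_lt_minus n f g : sum_lt n (fun k => f k - g k) = sum_lt n f - sum_lt n g.
Proof. induction n; [unfold sum_lt; simpl; ring|]. rewrite !sum_lt_S, IHn. ring. Qed.

Lemma sum_lt_add m n f : sum_lt (m + n) f = sum_lt m f + sum_lt n (fun j => f (m + j)%nat).
Proof.
  induction n; [rewrite Nat.add_0_r; unfold sum_lt at 3; simpl; ring|].
  rewrite Nat.add_succ_r, !sum_lt_S, IHn. ring.
Qed.

Lemma sum_lt_shift n f : sum_lt (S n) f = f 0%nat + sum_lt n (fun j => f (S j)).
Proof.
  replace (S n) with (1 + n)%nat by lia. rewrite sum_lt_add, sum_lt_S, sum_lt_0. simpl. ring.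
Qed.

Lemma sum_lt_rev n f : sum_lt n (fun j => f (n - 1 - j)%nat) = sum_lt n f.
Proof.
  induction n; [reflexivity|].
  rewrite sum_lt_shift, sum_lt_S. rewrite <- IHn.
  replace (S n - 1 - 0)%nat with n by lia.
  rewrite (sum_lt_ext n (fun j => f (S n - 1 - S j)%nat) (fun j => f (n - 1 - j)%nat))
    by (intros; f_equal; lia). ring.
Qed.

Lemma sum_lt_sumf n f : sum_lt (S n) f = sum_f_R0 f n.
Proof. induction n; [unfold sum_lt; simpl; ring|]. rewrite sum_lt_S, IHn. reflexivity. Qed.

Definition w (mu : R) (k : nat) : R := mu ^ k / INR (fact k).
Definition E (mu : R) (m : nat) : R := sum_lt m (w mu).

Lemma w_S mu k : w mu (S k) = w mu k * (mu / INR (S k)).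
Proof.
  unfold w. rewrite fact_simpl, mult_INR. simpl pow.
  assert (INR (fact k) <> 0) by apply INR_fact_neq_0.
  assert (INR (S k) <> 0) by (apply not_0_INR; lia).
  field. auto.
Qed.

Lemma w_nonneg mu k : 0 <= mu -> 0 <= w mu k.
Proof.
  intros. unfold w. apply Rdiv_le_0_compat; [apply pow_le; auto|].
  apply lt_0_INR, lt_O_fact.
Qed.

Lemma E_lim mu : is_lim_seq (E mu) (exp mu).
Proof.
  apply is_lim_seq_incr_1. apply is_lim_seq_Reals.
  unfold exp. destruct (exist_exp mu) as [l Hl]. simpl.
  intros eps Heps. destruct (Hl eps Heps) as [N HN]. exists N. intros n Hn.
  unfold E. rewrite sum_lt_sumf.
  rewrite (sum_eq (w mu) (fun i => / INR (fact i) * mu ^ i)); [apply HN; auto|].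
  intros. unfold w, Rdiv. ring.
Qed.

Lemma E_mono mu m n : 0 <= mu -> (m <= n)%nat -> E mu m <= E mu n.
Proof.
  intros H1 H2. unfold E. replace n with (m + (n - m))%nat by lia.
  rewrite sum_lt_add. assert (0 <= sum_lt (n - m) (fun j => w mu (m + j))).
  { apply sum_lt_nonneg. intros. apply w_nonneg; auto. }
  lra.
Qed.

Lemma E_le_exp mu m : 0 <= mu -> E mu m <= exp mu.
Proof.
  intros H.
  assert (Hl := E_lim mu). apply (is_lim_seq_incr_n _ m) in Hl.
  assert (Rbar_le (E mu m) (exp mu)).
  { apply (is_lim_seq_le (fun _ => E mu m) (fun n => E mu (n + m)%nat)).
    - intros. apply E_mono; auto; lia.
    - apply is_lim_seq_const.
    - exact Hl. }
  simpl in H0. exact H0.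
Qed.

Lemma w_ratio mu m i : 0 <= mu ->
  w mu (m + i) <= w mu m * (mu / INR (S m)) ^ i.
Proof.
  intros H. induction i.
  - rewrite Nat.add_0_r. simpl. lra.
  - rewrite Nat.add_succ_r, w_S. rewrite <- tech_pow_Rmult.
    assert (0 <= mu / INR (S (m + i)) <= mu / INR (S m)).
    { assert (0 < INR (S m)) by (apply lt_0_INR; lia).
      assert (INR (S m) <= INR (S (m + i))) by (apply le_INR; lia).
      split. apply Rdiv_le_0_compat; lra.
      unfold Rdiv. apply Rmult_le_compat_l; auto. apply Rinv_le_contravar; lra. }
    assert (0 <= w mu (m + i)) by (apply w_nonneg; auto).
    assert (0 <= (mu / INR (S m)) ^ i) by (apply pow_le; apply Rdiv_le_0_compat; [lra| apply lt_0_INR; lia]).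
    assert (0 <= w mu m) by (apply w_nonneg; auto).
    apply Rle_trans with (w mu m * (mu / INR (S m)) ^ i * (mu / INR (S m))).
    + apply Rmult_le_compat; lra.
    + right; ring.
Qed.

Lemma geom_sum r N : sum_lt N (fun i => r ^ i) * (1 - r) = 1 - r ^ N.
Proof. induction N; [unfold sum_lt; simpl; ring|]. rewrite sum_lt_S. simpl pow. nra. Qed.

Lemma E_tail mu m : 0 <= mu -> mu < INR (S m) ->
  exp mu - E mu m <= w mu m * (INR (S m) / (INR (S m) - mu)).
Proof.
  intros H0 H1. set (r := mu / INR (S m)).
  assert (HS : 0 < INR (S m)) by lra.
  assert (Hr : 0 <= r < 1).
  { unfold r. split. apply Rdiv_le_0_compat; lra.
    apply Rmult_lt_reg_r with (INR (S m)); auto. unfold Rdiv. rewrite Rmult_assoc, Rinv_l; lra. }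
  assert (Heq : INR (S m) / (INR (S m) - mu) = / (1 - r)).
  { unfold r. field. lra. }
  rewrite Heq.
  assert (Hw : 0 <= w mu m) by (apply w_nonneg; auto).
  assert (Hb : forall N, E mu (m + N) - E mu m <= w mu m * / (1 - r)).
  { intros N. unfold E. rewrite sum_lt_add.
    apply Rle_trans with (sum_lt N (fun i => w mu m * r ^ i)).
    - assert (sum_lt N (fun j => w mu (m + j)%nat) <= sum_lt N (fun i => w mu m * r ^ i)).
      { apply sum_lt_le. intros. apply w_ratio; auto. }
      lra.
    - rewrite sum_lt_scal. apply Rmult_le_compat_l; auto.
      assert (G := geom_sum r N).
      assert (0 <= r ^ N) by (apply pow_le; lra).
      apply Rmult_le_reg_r with (1 - r); [lra|]. rewrite Rinv_l by lra. change (sum_lt N (fun i => r ^ i) * (1 - r) <= 1). rewrite G. lra. }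
  assert (Hl := E_lim mu). apply (is_lim_seq_incr_n _ m) in Hl.
  assert (Rbar_le (exp mu - E mu m) (w mu m * / (1 - r))).
  { apply (is_lim_seq_le (fun n => E mu (n + m)%nat - E mu m) (fun _ => w mu m * / (1 - r))).
    - intros n. rewrite Nat.add_comm. apply Hb.
    - apply (is_lim_seq_minus' _ _ (exp mu) (E mu m)); [exact Hl|apply is_lim_seq_const].
    - apply is_lim_seq_const. }
  simpl in H. exact H.
Qed.

Lemma step_A u v x d1 d2 : 0 <= u -> 0 <= v -> 0 < x -> 0 < d1 -> 0 < d2 ->
  d1 * d2 <= x * x -> u * (x / d1) <= v -> u <= v * (x / d2).
Proof.
  intros Hu Hv Hx H1 H2 Hd H.
  assert (H' : u * x <= v * d1).
  { apply Rmult_le_reg_r with (/ d1). apply Rinv_0_lt_compat; auto.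
    replace (v * d1 * / d1) with v by (field; lra). unfold Rdiv in H. lra. }
  apply Rmult_le_reg_r with (d2 * x). nra.
  replace (v * (x / d2) * (d2 * x)) with (v * x * x) by (field; lra).
  nra.
Qed.

Lemma step_B P beta u x d1 d2 : 0 <= P -> 0 <= beta -> 0 <= u -> 0 < x -> 0 < d1 -> 0 < d2 ->
  beta * x * x <= d1 * d2 -> P <= u * (x / d1) -> beta * P * (x / d2) <= u.
Proof.
  intros HP Hb Hu Hx H1 H2 Hd H.
  assert (H' : P * d1 <= u * x).
  { apply Rmult_le_reg_r with (/ d1). apply Rinv_0_lt_compat; auto.
    replace (u * x * / d1) with (u * (x / d1)) by (field; lra).
    replace (P * d1 * / d1) with P by (field; lra). lra. }
  apply Rmult_le_reg_r with (d1 * d2). nra.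
  replace (beta * P * (x / d2) * (d1 * d2)) with (beta * x * (P * d1)) by (field; lra).
  apply Rle_trans with (beta * x * (u * x)). apply Rmult_le_compat_l; nra.
  nra.
Qed.

Lemma w_down x m j : (S j <= m)%nat ->
  w x (m - j) = w x (m - S j) * (x / INR (m - j)).
Proof.
  intros H. replace (m - j)%nat with (S (m - S j)) at 1 by lia. rewrite w_S.
  f_equal. f_equal. f_equal. f_equal. lia.
Qed.

Lemma pairA m j : (j <= m)%nat ->
  w (INR (S m)) (m - j) <= w (INR (S m)) (S m + j).
Proof.
  set (x := INR (S m)).
  assert (Hx : 0 < x) by (apply lt_0_INR; lia).
  induction j; intros Hj.
  - rewrite Nat.add_0_r, w_S, Nat.sub_0_r. fold x. unfold Rdiv. rewrite Rinv_r by lra. lra.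
  - assert (IH := IHj ltac:(lia)).
    rewrite (w_down x m j) in IH by lia.
    rewrite Nat.add_succ_r, w_S.
    apply step_A with (d1 := INR (m - j)) (x := x); try apply w_nonneg; try lra.
    + apply lt_0_INR. lia.
    + apply lt_0_INR. lia.
    + rewrite minus_INR by lia. unfold x. rewrite !S_INR, plus_INR, S_INR.
      assert (0 <= INR j) by apply pos_INR. nra.
Qed.

Lemma pairB m J beta j : 0 <= beta ->
  beta * INR (S m) * INR (S m) <= INR (S m) * INR (S m) - INR J * INR J ->
  (j < J)%nat -> (j <= m)%nat ->
  beta ^ j * w (INR (S m)) (S m + j) <= w (INR (S m)) (m - j).
Proof.
  set (x := INR (S m)).
  assert (Hx : 0 < x) by (apply lt_0_INR; lia).
  intros Hb HJ. induction j; intros Hj1 Hj2.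
  - rewrite Nat.add_0_r, w_S, Nat.sub_0_r. fold x. unfold Rdiv. rewrite Rinv_r by lra. simpl. lra.
  - assert (IH := IHj ltac:(lia) ltac:(lia)).
    rewrite (w_down x m j) in IH by lia.
    rewrite Nat.add_succ_r, w_S. rewrite <- tech_pow_Rmult.
    replace (beta * beta ^ j * (w x (S m + j) * (x / INR (S (S m + j)))))
      with (beta * (beta ^ j * w x (S m + j)) * (x / INR (S (S m + j)))) by ring.
    apply step_B with (d1 := INR (m - j)); try apply w_nonneg; try lra.
    + apply Rmult_le_pos. apply pow_le; auto. apply w_nonneg; lra.
    + apply lt_0_INR. lia.
    + apply lt_0_INR. lia.
    + rewrite minus_INR by lia. unfold x in *. rewrite !S_INR, plus_INR, S_INR.
      rewrite S_INR in HJ.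
      assert (0 <= INR j) by apply pos_INR.
      assert (INR (S j) <= INR J) by (apply le_INR; lia). rewrite S_INR in H0.
      nra.
Qed.

Lemma E_upper m : 2 * E (INR (S m)) (S m) <= exp (INR (S m)).
Proof.
  set (x := INR (S m)).
  assert (Hx : 0 < x) by (apply lt_0_INR; lia).
  assert (H1 : E x (S m) <= sum_lt (S m) (fun j => w x (S m + j))).
  { unfold E. rewrite <- sum_lt_rev. apply sum_lt_le. intros k Hk.
    replace (S m - 1 - k)%nat with (m - k)%nat by lia. apply pairA. lia. }
  assert (H2 : E x (S m + S m) = E x (S m) + sum_lt (S m) (fun j => w x (S m + j))).
  { unfold E. apply sum_lt_add. }
  assert (H3 := E_le_exp x (S m + S m) ltac:(lra)). lra.
Qed.

Lemma a_upper m : exp (- INR (S m)) * E (INR (S m)) (S m) <= 1/2.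
Proof.
  assert (H := E_upper m).
  assert (Hp : 0 < exp (- INR (S m))) by apply exp_pos.
  assert (He : exp (- INR (S m)) * exp (INR (S m)) = 1).
  { rewrite <- exp_plus. replace (- INR (S m) + INR (S m)) with 0 by ring. apply exp_0. }
  nra.
Qed.

Lemma sum_lt_const n c : sum_lt n (fun _ => c) = INR n * c.
Proof. induction n; [unfold sum_lt; simpl; ring|]. rewrite sum_lt_S, IHn, S_INR. ring. Qed.

Lemma pow_1plus y k : 0 <= y -> (1 + y) ^ k <= exp (INR k * y).
Proof.
  intros Hy. induction k.
  - simpl. rewrite Rmult_0_l, exp_0. lra.
  - rewrite <- tech_pow_Rmult, S_INR.
    replace ((INR k + 1) * y) with (INR k * y + y) by ring. rewrite exp_plus.
    assert (1 + y <= exp y) by apply exp_ineq1_le.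
    assert (0 <= (1 + y) ^ k) by (apply pow_le; lra).
    rewrite Rmult_comm. apply Rmult_le_compat; lra.
Qed.

Lemma T_bound m : let n := S m in let x := INR n in let s := Nat.sqrt n in
  INR (S s) * w x n <= exp 1 * exp x.
Proof.
  intros n x s.
  assert (Hx : 0 < x) by (apply lt_0_INR; lia).
  assert (Hs : (s * s <= n)%nat) by (apply Nat.sqrt_spec; lia).
  assert (HsR : INR s * INR s <= x) by (unfold x; rewrite <- mult_INR; apply le_INR; auto).
  assert (Hs0 : 0 <= INR s) by apply pos_INR.
  set (c := 1 + INR s / x).
  assert (Hc : 1 <= c) by (unfold c; assert (0 <= INR s / x) by (apply Rdiv_le_0_compat; lra); lra).
  assert (Hi : forall i, (i <= s)%nat -> w x n <= w x (n + i) * c ^ i).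
  { induction i; intros Hi.
    - rewrite Nat.add_0_r. simpl. lra.
    - assert (IH := IHi ltac:(lia)).
      rewrite Nat.add_succ_r, w_S, <- tech_pow_Rmult.
      apply Rle_trans with (1 := IH).
      replace (w x (n + i) * (x / INR (S (n + i))) * (c * c ^ i))
        with (w x (n + i) * c ^ i * (x * c / INR (S (n + i)))) by (unfold Rdiv; ring).
      assert (0 <= w x (n + i) * c ^ i) by (apply Rmult_le_pos; [apply w_nonneg; lra| apply pow_le; lra]).
      assert (1 <= x * c / INR (S (n + i))).
      { assert (HSi : 0 < INR (S (n + i))) by (apply lt_0_INR; lia).
        assert (INR (S (n + i)) <= x + INR s).
        { unfold x. rewrite S_INR, plus_INR. assert (INR (S i) <= INR s) by (apply le_INR; lia).
          rewrite S_INR in H0. lra. }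
        assert (x * c = x + INR s) by (unfold c; field; lra).
        rewrite H1. apply Rmult_le_reg_r with (INR (S (n + i))); auto.
        unfold Rdiv. rewrite Rmult_assoc, Rinv_l by lra. lra. }
      nra. }
  assert (Hcs : c ^ s <= exp 1).
  { apply Rle_trans with (exp (INR s * (INR s / x))).
    - apply pow_1plus. apply Rdiv_le_0_compat; lra.
    - destruct (Rle_lt_or_eq_dec _ _ (Rle_refl 0)); [|].
      all: assert (INR s * (INR s / x) <= 1)
        by (apply Rmult_le_reg_r with x; auto; unfold Rdiv; rewrite Rmult_assoc, (Rmult_assoc (INR s)), Rinv_l by lra; lra).
      all: destruct (Rle_lt_or_eq_dec _ _ H) as [Hlt|Heq]; [left; apply exp_increasing; auto| rewrite Heq; lra]. }
  assert (Hlow : forall i, (i < S s)%nat -> w x n / exp 1 <= w x (n + i)).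
  { intros i Hi'. assert (Hci : c ^ i <= exp 1).
    { apply Rle_trans with (c ^ s); auto. apply Rle_pow; auto; lia. }
    assert (H1 := Hi i ltac:(lia)).
    assert (0 <= w x (n + i)) by (apply w_nonneg; lra).
    assert (0 < exp 1) by apply exp_pos.
    apply Rmult_le_reg_r with (exp 1); auto. unfold Rdiv. rewrite Rmult_assoc, Rinv_l by lra.
    nra. }
  assert (Hsum : INR (S s) * (w x n / exp 1) <= exp x).
  { rewrite <- sum_lt_const.
    apply Rle_trans with (sum_lt (S s) (fun i => w x (n + i))).
    - apply sum_lt_le. auto.
    - assert (E x (n + S s) = E x n + sum_lt (S s) (fun i => w x (n + i))) by (unfold E; apply sum_lt_add).
      assert (0 <= E x n) by (unfold E; apply sum_lt_nonneg; intros; apply w_nonneg; lra).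
      assert (E x (n + S s) <= exp x) by (apply E_le_exp; lra). lra. }
  assert (0 < exp 1) by apply exp_pos.
  replace (INR (S s) * w x n) with (INR (S s) * (w x n / exp 1) * exp 1) by (field; lra).
  rewrite (Rmult_comm (exp 1)). apply Rmult_le_compat_r; lra.
Qed.

Lemma bernoulli th k : 0 <= th <= 1 -> 1 - INR k * th <= (1 - th) ^ k.
Proof.
  intros H. induction k.
  - simpl. lra.
  - rewrite <- tech_pow_Rmult, S_INR.
    assert (0 <= INR k) by apply pos_INR. nra.
Qed.

Lemma pow_decr b j J : 0 <= b <= 1 -> (j <= J)%nat -> b ^ J <= b ^ j.
Proof.
  intros Hb HjJ. replace J with (j + (J - j))%nat by lia. rewrite pow_add.
  assert (0 <= b ^ j) by (apply pow_le; lra).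
  assert (b ^ (J - j) <= 1).
  { induction (J - j)%nat. simpl; lra. rewrite <- tech_pow_Rmult.
    assert (0 <= b ^ n) by (apply pow_le; lra). nra. }
  nra.
Qed.

Lemma lower_main m J : (J <= m)%nat ->
  let x := INR (S m) in
  let a := exp (- x) * E x (S m) in
  let t := exp (- x) * w x (S m) in
  1/2 - a <= INR J * INR J * INR J / (x * x) / 2
             + t * (INR (S (S m + J)) / (INR (S (S m + J)) - x)).
Proof.
  intros HJ x a t.
  assert (Hx : 0 < x) by (apply lt_0_INR; lia).
  assert (HJx : INR J < x) by (apply lt_INR; lia).
  assert (HJ0 : 0 <= INR J) by apply pos_INR.
  set (th := INR J * INR J / (x * x)).
  assert (Hth : 0 <= th <= 1).
  { unfold th. split. apply Rdiv_le_0_compat; nra.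
    apply Rmult_le_reg_r with (x * x). nra. unfold Rdiv. rewrite Rmult_assoc, Rinv_l by nra. nra. }
  set (beta := 1 - th).
  set (D := sum_lt J (fun j => w x (S m + j))).
  assert (HD0 : 0 <= D) by (apply sum_lt_nonneg; intros; apply w_nonneg; lra).
  assert (L1 : beta ^ J * D <= E x (S m)).
  { unfold D. rewrite <- sum_lt_scal.
    apply Rle_trans with (sum_lt J (fun j => w x (m - j)%nat)).
    - apply sum_lt_le. intros j Hj.
      apply Rle_trans with (beta ^ j * w x (S m + j)).
      + apply Rmult_le_compat_r. apply w_nonneg; lra. apply pow_decr; unfold beta; lra || lia.
      + apply pairB with (J := J); try lia; unfold beta; try lra.
        unfold th. fold x. field_simplify; nra.
    - unfold E. rewrite <- (sum_lt_rev (S m) (w x)).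
      rewrite (sum_lt_ext (S m) (fun j => w x (S m - 1 - j)%nat) (fun j => w x (m - j)%nat))
        by (intros; f_equal; lia).
      replace (S m) with (J + (S m - J))%nat by lia. rewrite sum_lt_add.
      assert (0 <= sum_lt (S m - J) (fun j => w x (m - (J + j))%nat))
        by (apply sum_lt_nonneg; intros; apply w_nonneg; lra).
      lra. }
  assert (L2 : exp x - E x (S m + J) <= w x (S m) * (INR (S (S m + J)) / (INR (S (S m + J)) - x))).
  { assert (HSn : x < INR (S (S m + J))).
    { unfold x. apply lt_INR. lia. }
    apply Rle_trans with (w x (S m + J) * (INR (S (S m + J)) / (INR (S (S m + J)) - x))).
    - apply E_tail; lra.
    - apply Rmult_le_compat_r. apply Rdiv_le_0_compat; lra.
      apply Rle_trans with (w x (S m) * (x / INR (S (S m))) ^ J).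
      + apply w_ratio; lra.
      + assert (0 <= x / INR (S (S m)) <= 1).
        { assert (x < INR (S (S m))) by (unfold x; apply lt_INR; lia).
          split. apply Rdiv_le_0_compat; lra.
          apply Rmult_le_reg_r with (INR (S (S m))). lra.
          unfold Rdiv. rewrite Rmult_assoc, Rinv_l by lra. lra. }
        assert (0 <= w x (S m)) by (apply w_nonneg; lra).
        assert ((x / INR (S (S m))) ^ J <= 1).
        { replace 1 with ((x / INR (S (S m))) ^ 0) by reflexivity. apply pow_decr; auto; lia. }
        nra. }
  assert (L3 : 1 - INR J * th <= beta ^ J) by (apply bernoulli; auto).
  assert (Hb1 : beta ^ J <= 1).
  { replace 1 with (beta ^ 0) by reflexivity. apply pow_decr; unfold beta; lra || lia. }
  assert (HDE : E x (S m + J) = E x (S m) + D) by (unfold E, D; apply sum_lt_add).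
  assert (Hup := a_upper m). fold x a in Hup.
  assert (Hep : 0 < exp (- x)) by apply exp_pos.
  assert (He : exp (- x) * exp x = 1).
  { rewrite <- exp_plus. replace (- x + x) with 0 by ring. apply exp_0. }
  assert (Ha0 : 0 <= a) by (unfold a; apply Rmult_le_pos; [lra| unfold E; apply sum_lt_nonneg; intros; apply w_nonneg; lra]).
  set (dl := t * (INR (S (S m + J)) / (INR (S (S m + J)) - x))).
  assert (Heta : INR J * INR J * INR J / (x * x) = INR J * th) by (unfold th; field; lra).
  rewrite Heta.
  set (d := exp (- x) * D).
  assert (Hd0 : 0 <= d) by (unfold d; nra).
  assert (F1 : beta ^ J * d <= a).
  { unfold d, a. replace (beta ^ J * (exp (- x) * D)) with (exp (- x) * (beta ^ J * D)) by ring.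
    apply Rmult_le_compat_l; lra. }
  assert (F2 : 1 - a - d <= dl).
  { unfold dl, t, a, d. rewrite HDE in L2.
    replace 1 with (exp (- x) * exp x) by exact He.
    rewrite Rmult_assoc. rewrite <- (Rmult_minus_distr_l (exp (-x))).
    rewrite <- Rmult_minus_distr_l. apply Rmult_le_compat_l; lra. }
  set (g := beta ^ J). fold g in F1, L3, Hb1.
  assert (0 <= INR J * th) by nra.
  assert (Hdl : 0 <= dl).
  { unfold dl, t. apply Rmult_le_pos. apply Rmult_le_pos. lra. apply w_nonneg; lra.
    assert (x < INR (S (S m + J))) by (unfold x; apply lt_INR; lia).
    apply Rdiv_le_0_compat; lra. }
  destruct (Rle_lt_dec 0 g) as [Hg|Hg]; [|lra].
  (* g (1 - a - dl) <= g d <= a *)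
  assert (g * (1 - a - dl) <= a) by nra.
  nra.
Qed.

Lemma nat_gt r : exists n : nat, r < INR n.
Proof. destruct (INR_archimed 1 r) as [n Hn]; [lra|]. exists n. lra. Qed.

Lemma T_le m : exp (- INR (S m)) * w (INR (S m)) (S m) <= 3 / INR (S (Nat.sqrt (S m))).
Proof.
  assert (H := T_bound m). cbv zeta in H.
  set (x := INR (S m)) in *. set (s := INR (S (Nat.sqrt (S m)))) in *.
  assert (Hs : 0 < s) by (unfold s; apply lt_0_INR; lia).
  assert (He : exp (- x) * exp x = 1).
  { rewrite <- exp_plus. replace (- x + x) with 0 by ring. apply exp_0. }
  assert (Hep : 0 < exp (- x)) by apply exp_pos.
  assert (H3 := exp_le_3).
  apply Rmult_le_reg_r with s; auto.
  replace (3 / s * s) with 3 by (field; lra).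
  assert (exp (- x) * (s * w x (S m)) <= exp (- x) * (exp 1 * exp x)) by (apply Rmult_le_compat_l; lra).
  nra.
Qed.

Lemma sqrt_ge m S0 : (S0 * S0 <= S m)%nat -> (S0 <= Nat.sqrt (S m))%nat.
Proof. intros. apply Nat.sqrt_le_square. auto. Qed.

Lemma T_lim : is_lim_seq (fun n => exp (- INR n) * w (INR n) n) 0.
Proof.
  apply is_lim_seq_Reals. intros eps Heps.
  destruct (nat_gt (3 / eps)) as [S0 HS0].
  exists (S (S0 * S0)). intros n Hn. destruct n as [|m]; [lia|].
  assert (Hs := sqrt_ge m S0 ltac:(lia)).
  set (s := Nat.sqrt (S m)) in *.
  assert (H := T_le m). fold s in H.
  assert (H0 : 0 <= exp (- INR (S m)) * w (INR (S m)) (S m)).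
  { apply Rmult_le_pos. apply Rlt_le, exp_pos. apply w_nonneg, pos_INR. }
  unfold Rdist. rewrite Rminus_0_r, Rabs_pos_eq by auto.
  assert (HsR : INR S0 <= INR s) by (apply le_INR; auto).
  assert (3 / INR (S s) < eps).
  { rewrite S_INR. apply Rmult_lt_reg_r with (INR s + 1). assert (0 <= INR S0) by apply pos_INR. lra.
    replace (3 / (INR s + 1) * (INR s + 1)) with 3 by (field; assert (0 <= INR S0) by apply pos_INR; lra).
    assert (3 < eps * INR S0).
    { apply Rmult_lt_reg_r with (/ eps). apply Rinv_0_lt_compat; auto.
      replace (eps * INR S0 * / eps) with (INR S0) by (field; lra). exact HS0. }
    nra. }
  lra.
Qed.
Lemma fin_P1 K s x : 1 <= K -> 1 <= s -> s * s <= x ->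
  (K * s) * (K * s) * (K * s) / (x * x) / 2 <= K * K * K / s.
Proof.
  intros HK Hs Hx.
  assert (Hx2 : s * s * (s * s) <= x * x) by nra.
  assert (0 < x) by nra.
  assert (HK3 : 0 < K * K * K) by (repeat apply Rmult_lt_0_compat; lra).
  unfold Rdiv. apply Rmult_le_reg_r with (2 * (x * x) * s). nra.
  replace ((K * s) * (K * s) * (K * s) * / (x * x) * / 2 * (2 * (x * x) * s)) with (K * K * K * (s * s * (s * s))) by (field; lra).
  replace (K * K * K * / s * (2 * (x * x) * s)) with (K * K * K * (2 * (x * x))) by (field; lra).
  apply Rmult_le_compat_l; nra.
Qed.

Lemma fin_P2 K s x t : 0 <= x -> 1 <= K -> 1 <= s -> x + 1 <= (s + 1) * (s + 1) -> 0 <= t -> t <= 3 / (s + 1) ->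
  t * ((x + K * s + 1) / (K * s + 1)) <= 6 / K + 3 / (s + 1).
Proof.
  intros Hx0 HK Hs Hx Ht0 Ht.
  assert (HKs : 1 <= K * s) by nra.
  assert (Hq : 0 <= (x + K * s + 1) / (K * s + 1)).
  { apply Rdiv_le_0_compat; nra. }
  apply Rle_trans with (3 / (s + 1) * ((x + K * s + 1) / (K * s + 1))).
  { apply Rmult_le_compat_r; auto. }
  apply Rle_trans with (3 / (s + 1) * (((s + 1) * (s + 1) + K * s) / (K * s + 1))).
  { apply Rmult_le_compat_l. apply Rdiv_le_0_compat; lra.
    unfold Rdiv. apply Rmult_le_compat_r. apply Rlt_le, Rinv_0_lt_compat; lra. lra. }
  replace (3 / (s + 1) * (((s + 1) * (s + 1) + K * s) / (K * s + 1)))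
    with (3 * (s + 1) / (K * s + 1) + 3 / (s + 1) * (K * s / (K * s + 1))) by (field; lra).
  apply Rplus_le_compat.
  - apply Rmult_le_reg_r with (K * (K * s + 1)). nra.
    replace (3 * (s + 1) / (K * s + 1) * (K * (K * s + 1))) with (3 * (s + 1) * K) by (field; lra).
    replace (6 / K * (K * (K * s + 1))) with (6 * (K * s + 1)) by (field; lra).
    nra.
  - assert (K * s / (K * s + 1) <= 1).
    { apply Rmult_le_reg_r with (K * s + 1). lra. unfold Rdiv. rewrite Rmult_assoc, Rinv_l by lra. lra. }
    assert (0 <= 3 / (s + 1)) by (apply Rdiv_le_0_compat; lra).
    nra.
Qed.

Lemma small_div c y eps : 0 < eps -> 0 < y -> 0 <= c -> 3 * c / eps < y -> c / y < eps / 3.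
Proof.
  intros He Hy Hc H.
  assert (3 * c < eps * y).
  { apply Rmult_lt_reg_r with (/ eps). apply Rinv_0_lt_compat; auto.
    replace (eps * y * / eps) with y by (field; lra). exact H. }
  apply Rmult_lt_reg_r with (3 * y). lra.
  replace (c / y * (3 * y)) with (3 * c) by (field; lra).
  replace (eps / 3 * (3 * y)) with (eps * y) by (field; lra). exact H0.
Qed.

Lemma a_lim : is_lim_seq (fun n => exp (- INR n) * E (INR n) n) (1/2).
Proof.
  apply is_lim_seq_Reals. intros eps Heps.
  destruct (nat_gt (3 * 6 / eps)) as [K0 HK0].
  set (K := S K0).
  assert (HKr : 3 * 6 / eps < INR K) by (unfold K; rewrite S_INR; lra).
  assert (HK1 : 1 <= INR K) by (unfold K; rewrite S_INR; assert (0 <= INR K0) by apply pos_INR; lra).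
  assert (HK3 : 0 <= INR K * INR K * INR K) by (assert (0 <= INR K) by lra; repeat apply Rmult_le_pos; lra).
  assert (Hp1 : 0 <= 3 * (INR K * INR K * INR K) / eps) by (apply Rdiv_le_0_compat; lra).
  assert (Hp2 : 0 <= 3 * 3 / eps) by (apply Rdiv_le_0_compat; lra).
  destruct (nat_gt (3 * (INR K * INR K * INR K) / eps + 3 * 3 / eps + INR K)) as [S0 HS0].
  exists (S (S0 * S0)). intros n Hn. destruct n as [|m]; [lia|].
  assert (Hs := sqrt_ge m S0 ltac:(lia)).
  assert (Hsp := Nat.sqrt_spec (S m) ltac:(lia)).
  set (s := Nat.sqrt (S m)) in *.
  assert (HsR : INR S0 <= INR s) by (apply le_INR; auto).
  assert (HKs : (K < s)%nat).
  { apply INR_lt. lra. }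
  assert (HJ : (K * s <= m)%nat) by nia.
  assert (Hlow := lower_main m (K * s) HJ). cbv zeta in Hlow.
  set (x := INR (S m)) in *.
  set (a := exp (- x) * E x (S m)) in *.
  set (t := exp (- x) * w x (S m)) in *.
  assert (Hup := a_upper m). fold x a in Hup.
  assert (Ht := T_le m). fold x t s in Ht.
  assert (Ht0 : 0 <= t) by (unfold t; apply Rmult_le_pos; [apply Rlt_le, exp_pos| apply w_nonneg; unfold x; apply pos_INR]).
  assert (Hs1 : 1 <= INR s) by lra.
  assert (Hx1 : INR s * INR s <= x) by (unfold x; rewrite <- mult_INR; apply le_INR; lia).
  assert (Hx2 : x + 1 <= (INR s + 1) * (INR s + 1)).
  { unfold x. rewrite <- S_INR. replace (INR s + 1) with (INR (S s)) by (rewrite S_INR; ring).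
    rewrite <- mult_INR. apply le_INR. lia. }
  rewrite mult_INR in Hlow.
  replace (INR (S (S m + K * s))) with (x + INR K * INR s + 1) in Hlow
    by (unfold x; rewrite (S_INR (S m + K * s)), plus_INR, mult_INR; ring).
  replace (x + INR K * INR s + 1 - x) with (INR K * INR s + 1) in Hlow by ring.
  rewrite S_INR in Ht.
  assert (P1 := fin_P1 (INR K) (INR s) x HK1 Hs1 Hx1).
  assert (P2 := fin_P2 (INR K) (INR s) x t ltac:(unfold x; apply pos_INR) HK1 Hs1 Hx2 Ht0 Ht).
  assert (Q1 : INR K * INR K * INR K / INR s < eps / 3) by (apply small_div; lra).
  assert (Q2 : 6 / INR K < eps / 3) by (apply small_div; lra).
  assert (Q3 : 3 / (INR s + 1) < eps / 3) by (apply small_div; lra).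
  unfold Rdist. rewrite Rabs_left1 by lra. lra.
Qed.

Lemma PSN_eq q z : 0 < q < 1/2 ->
  let l := q / (1 - q) in let mu := INR z * l in
  P_SN q z = 1 - exp (- mu) * E mu z + exp (- mu) * l ^ z * E (INR z) z.
Proof.
  intros Hq l mu. unfold P_SN.
  assert (Hmu : INR z * q / (1 - q) = mu) by (unfold mu, l; unfold Rdiv; ring).
  rewrite Hmu.
  rewrite (sum_lt_ext z _ (fun k => exp (- mu) * w mu k - exp (- mu) * l ^ z * w (INR z) k)).
  - rewrite sum_lt_minus, !sum_lt_scal. unfold E. fold l. ring.
  - intros k Hk. fold l. unfold w, mu.
    replace (l ^ z) with (l ^ k * l ^ (z - k)) by (rewrite <- pow_add; f_equal; lia).
    rewrite Rpow_mult_distr. unfold Rdiv. ring.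
Qed.

Lemma exp_c q z : 0 < q < 1/2 ->
  let l := q / (1 - q) in let mu := INR z * l in
  exp (- (INR z * c_fun l)) = exp (- mu) * exp (INR z) * l ^ z.
Proof.
  intros Hq l mu.
  assert (Hl : 0 < l) by (unfold l; apply Rdiv_lt_0_compat; lra).
  unfold c_fun.
  replace (- (INR z * (l - 1 - ln l))) with (- mu + INR z + INR z * ln l) by (unfold mu; ring).
  rewrite !exp_plus. rewrite <- (Rpower_pow z l Hl). unfold Rpower. reflexivity.
Qed.

Theorem mainTheorem8 (q : R) (hq0 : 0 < q) (hq1 : q < 1 / 2) :
  is_lim_seq
    (fun z : nat => P_SN q z / (exp (- (INR z * c_fun (q / (1 - q)))) / 2))
    1.
Proof.
  set (l := q / (1 - q)).
  assert (Hl : 0 < l < 1).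
  { unfold l. split. apply Rdiv_lt_0_compat; lra.
    apply Rmult_lt_reg_r with (1 - q). lra. unfold Rdiv. rewrite Rmult_assoc, Rinv_l by lra. lra. }
  set (a := fun n : nat => exp (- INR n) * E (INR n) n).
  set (T := fun n : nat => exp (- INR n) * w (INR n) n).
  set (Rz := fun z : nat => (1 - exp (- (INR z * l)) * E (INR z * l) z)
                          / (exp (- (INR z * l)) * exp (INR z) * l ^ z)).
  assert (Hsplit : forall z, P_SN q z / (exp (- (INR z * c_fun l)) / 2) = 2 * a z + 2 * Rz z).
  { intros z. unfold l. rewrite (PSN_eq q z) by lra. rewrite (exp_c q z) by lra. fold l.
    unfold a, Rz. rewrite (exp_Ropp (INR z)).
    assert (0 < exp (- (INR z * l))) by apply exp_pos.
    assert (0 < exp (INR z)) by apply exp_pos.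
    assert (0 < l ^ z) by (apply pow_lt; lra).
    field. split; lra. }
  assert (HR : forall z, 0 <= Rz z <= T z * / (1 - l)).
  { intros z. unfold Rz, T.
    set (mu := INR z * l).
    assert (Hz : 0 <= INR z) by apply pos_INR.
    assert (Hmu0 : 0 <= mu) by (unfold mu; nra).
    assert (Hmu1 : mu < INR (S z)) by (unfold mu; rewrite S_INR; nra).
    assert (He1 := E_le_exp mu z Hmu0).
    assert (He2 := E_tail mu z Hmu0 Hmu1).
    assert (Hem : 0 < exp (- mu)) by apply exp_pos.
    assert (Hez : 0 < exp (INR z)) by apply exp_pos.
    assert (Hlz : 0 < l ^ z) by (apply pow_lt; lra).
    assert (Hmm : exp (- mu) * exp mu = 1).
    { rewrite <- exp_plus. replace (- mu + mu) with 0 by ring. apply exp_0. }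
    assert (Hw : w mu z = l ^ z * w (INR z) z).
    { unfold w, mu. rewrite Rpow_mult_distr. unfold Rdiv. ring. }
    assert (Hwz : 0 <= w (INR z) z) by (apply w_nonneg; auto).
    set (rho := INR (S z) / (INR (S z) - mu)).
    assert (Hrho : 0 <= rho <= / (1 - l)).
    { unfold rho. rewrite S_INR in *. split. apply Rdiv_le_0_compat; lra.
      apply Rmult_le_reg_r with ((INR z + 1 - mu) * (1 - l)). apply Rmult_lt_0_compat; lra.
      replace ((INR z + 1) / (INR z + 1 - mu) * ((INR z + 1 - mu) * (1 - l))) with ((INR z + 1) * (1 - l)) by (field; lra).
      replace (/ (1 - l) * ((INR z + 1 - mu) * (1 - l))) with (INR z + 1 - mu) by (field; lra).
      unfold mu. nra. }
    fold rho in He2.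
    assert (Hnum : 1 - exp (- mu) * E mu z = exp (- mu) * (exp mu - E mu z)).
    { rewrite Rmult_minus_distr_l, Hmm. ring. }
    rewrite Hnum. split.
    - apply Rdiv_le_0_compat. apply Rmult_le_pos; lra. apply Rmult_lt_0_compat; [apply Rmult_lt_0_compat|]; lra.
    - apply Rle_trans with (exp (- mu) * (l ^ z * w (INR z) z * rho) / (exp (- mu) * exp (INR z) * l ^ z)).
      + unfold Rdiv. apply Rmult_le_compat_r.
        apply Rlt_le, Rinv_0_lt_compat. apply Rmult_lt_0_compat; [apply Rmult_lt_0_compat|]; lra.
        apply Rmult_le_compat_l. lra. rewrite <- Hw. exact He2.
      + replace (exp (- mu) * (l ^ z * w (INR z) z * rho) / (exp (- mu) * exp (INR z) * l ^ z))
          with (/ exp (INR z) * w (INR z) z * rho) by (field; lra).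
        rewrite <- exp_Ropp.
        assert (0 <= exp (- INR z) * w (INR z) z) by (apply Rmult_le_pos; [apply Rlt_le, exp_pos|lra]).
        apply Rmult_le_compat_l; lra. }
  apply (is_lim_seq_ext (fun z => 2 * a z + 2 * Rz z)).
  { intros z. rewrite Hsplit. reflexivity. }
  replace (Finite 1) with (Finite (2 * (1/2) + 2 * 0)) by (f_equal; field).
  apply is_lim_seq_plus'.
  - apply (is_lim_seq_scal_l a 2 (1/2)). apply a_lim.
  - apply (is_lim_seq_scal_l Rz 2 0).
    apply is_lim_seq_le_le with (u := fun _ => 0) (w := fun z => T z * / (1 - l)).
    + exact HR.
    + apply is_lim_seq_const.
    + replace (Finite 0) with (Finite (0 * / (1 - l))) by (f_equal; ring).
      apply is_lim_seq_mult'. apply T_lim. apply is_lim_seq_const.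
Qed.
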